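(* Let $G$ be a finite group of order $n$, let $f:G\to\mathbb{Q}$ be a class function with $f(g)=f(g^{-1})$ for all $g\in G$, and let $\Gamma_f=\operatorname{Cay}(G,f)$. Let $H_f=\{h\in\mathbb{Z}_n^*\mid f^h=f\}$. Then $$\mathbb{SF}(\Gamma_f)=\mathbb{Q}(\zeta_n)^{\eta^{-1}(H_f)}=\{x\in\mathbb{Q}(\zeta_n)\mid \sigma(x)=x\text{ for all }\sigma\in\eta^{-1}(H_f)\},$$ and $$\operatorname{Deg}(\Gamma_f)=\frac{\varphi(n)}{|H_f|},$$ where $\varphi$ is Euler's totient function.
   Context: $\zeta_n=e^{2\pi i/n}$; $\mathbb{Z}_n^*$ is the unit group of $\mathbb{Z}/n\mathbb{Z}$; $\eta:\operatorname{Gal}(\mathbb{Q}(\zeta_n)/\mathbb{Q})\to\mathbb{Z}_n^*$ is the isomorphism with $\sigma(\zeta_n)=\zeta_n^{\eta(\sigma)}$. A class function is constant on conjugacy classes. For $h\in\mathbb{Z}_n^*$, $f^h(g)=f(g^h)$. The Cayley colour graph $\Gamma_f=\operatorname{Cay}(G,f)$ has vertex set $G$ and adjacency matrix $[f(gh^{-1})]_{g,h\in G}$; its eigenvalues are those of this matrix. $\mathbb{SF}(\Gamma_f)$ is the smallest subfield of $\mathbb{C}$ containing all eigenvalues of $\Gamma_f$, and the algebraic degree is $\operatorname{Deg}(\Gamma_f)=[\mathbb{SF}(\Gamma_f):\mathbb{Q}]$. *)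

(* Defs.v *)
From HB Require Import structures.
From mathcomp Require Import all_boot all_order all_algebra all_fingroup all_field.
Set Implicit Arguments. Unset Strict Implicit. Unset Printing Implicit Defensive.
Import Order.TTheory GRing.Theory Num.Theory.
Local Open Scope ring_scope.

Definition is_subfield (S : algC -> Prop) : Prop :=
  S 0 /\ S 1 /\
  (forall x y, S x -> S y -> S (x + y)) /\
  (forall x, S x -> S (- x)) /\
  (forall x y, S x -> S y -> S (x * y)) /\
  (forall x, S x -> S x^-1).

Definition gen_field (P : algC -> Prop) (x : algC) : Prop :=
  forall S, is_subfield S -> (forall y, P y -> S y) -> S x.

Definition Qdim (S : algC -> Prop) (d : nat) : Prop :=
  exists b : d.-tuple algC,
    [/\ (forall i, S (tnth b i)),
        (forall x, S x <-> exists c : d.-tuple rat,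
                               x = \sum_(i < d) ratr (tnth c i) * tnth b i) &
        (forall c : d.-tuple rat,
            \sum_(i < d) ratr (tnth c i) * tnth b i = 0 -> forall i, tnth c i = 0)].

Definition cayley_adj (gT : finGroupType) (G : {group gT}) (f : gT -> rat)
  : 'M[algC]_#|G| :=
  \matrix_(i, j) ratr (f (enum_val i * (enum_val j)^-1)%g).

Definition SF (gT : finGroupType) (G : {group gT}) (f : gT -> rat) : algC -> Prop :=
  gen_field (fun a => eigenvalue (cayley_adj G f) a).

Definition Hf (gT : finGroupType) (G : {group gT}) (f : gT -> rat) : {set 'I_#|G|} :=
  [set h : 'I_#|G| | coprime h #|G| && [forall g in G, f (g ^+ h)%g == f g]].

(* Main.v *)
Require Import Defs.
From HB Require Import structures.
From mathcomp Require Import all_boot all_order all_algebra all_fingroup all_field.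
From mathcomp Require Import all_solvable all_character.
From mathcomp Require Import ring.
Import Order.TTheory GRing.Theory Num.Theory.
Local Open Scope ring_scope.
Set Implicit Arguments. Unset Strict Implicit. Unset Printing Implicit Defensive.

Lemma sf0 S : is_subfield S -> S 0. Proof. by case. Qed.
Lemma sf1 S : is_subfield S -> S 1. Proof. by case=> _ []. Qed.
Lemma sfD S : is_subfield S -> forall x y, S x -> S y -> S (x + y).
Proof. by case=> _ [] _ []. Qed.
Lemma sfN S : is_subfield S -> forall x, S x -> S (- x).
Proof. by case=> _ [] _ [] _ []. Qed.
Lemma sfM S : is_subfield S -> forall x y, S x -> S y -> S (x * y).
Proof. by case=> _ [] _ [] _ [] _ []. Qed.
Lemma sfV S : is_subfield S -> forall x, S x -> S x^-1.
Proof. by case=> _ [] _ [] _ [] _ []. Qed.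

Lemma sfB S : is_subfield S -> forall x y, S x -> S y -> S (x - y).
Proof. by move=> sS x y Sx Sy; apply: sfD => //; apply: sfN. Qed.

Lemma sf_sum S (I : Type) (r : seq I) (P : pred I) (F : I -> algC) :
  is_subfield S -> (forall i, P i -> S (F i)) -> S (\sum_(i <- r | P i) F i).
Proof.
move=> sS SF; apply: (big_ind S); [exact: sf0 | exact: sfD | exact: SF].
Qed.

Lemma sf_prod S (I : Type) (r : seq I) (P : pred I) (F : I -> algC) :
  is_subfield S -> (forall i, P i -> S (F i)) -> S (\prod_(i <- r | P i) F i).
Proof.
move=> sS SF; apply: (big_ind S); [exact: sf1 | exact: sfM | exact: SF].
Qed.

Lemma sfX S : is_subfield S -> forall x k, S x -> S (x ^+ k).
Proof.
move=> sS x k Sx; elim: k => [|k IH]; first by rewrite expr0; apply: sf1.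
by rewrite exprS; apply: sfM.
Qed.

Lemma sf_nat S : is_subfield S -> forall k : nat, S k%:R.
Proof.
move=> sS; elim=> [|k IH]; first exact: sf0.
by rewrite -addn1 natrD; apply: sfD => //; apply: sf1.
Qed.

Lemma sf_int S : is_subfield S -> forall k : int, S k%:~R.
Proof.
move=> sS [k|k]; first exact: sf_nat sS k.
by rewrite NegzE mulrNz; apply: sfN => //; exact: sf_nat sS k.+1.
Qed.

Lemma sf_rat S : is_subfield S -> forall q : rat, S (ratr q).
Proof.
move=> sS q.
have -> : ratr q = (numq q)%:~R / (denq q)%:~R :> algC.
  by rewrite -{1}[q]divq_num_den fmorph_div !rmorph_int.
exact: (sfM sS (sf_int sS _) (sfV sS (sf_int sS _))).
Qed.

Lemma gen_field_subfield P : is_subfield (gen_field P).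
Proof.
split; first by move=> S sS _; apply: sf0.
split; first by move=> S sS _; apply: sf1.
split; first by move=> x y Hx Hy S sS PS; apply: sfD => //; [apply: Hx|apply: Hy].
split; first by move=> x Hx S sS PS; apply: sfN => //; apply: Hx.
split; first by move=> x y Hx Hy S sS PS; apply: sfM => //; [apply: Hx|apply: Hy].
by move=> x Hx S sS PS; apply: sfV => //; apply: Hx.
Qed.

Lemma gen_field_in (P : algC -> Prop) y : P y -> gen_field P y.
Proof. by move=> Py S _ PS; apply: PS. Qed.

Lemma fixed_subfield (u : {rmorphism algC -> algC}) : is_subfield (fun x => u x = x).
Proof.
split; first by rewrite rmorph0.
split; first by rewrite rmorph1.
split; first by move=> x y Hx Hy; rewrite rmorphD /= Hx Hy.
split; first by move=> x Hx; rewrite rmorphN /= Hx.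
split; first by move=> x y Hx Hy; rewrite rmorphM /= Hx Hy.
by move=> x Hx; rewrite fmorphV /= Hx.
Qed.

Lemma image_subfield (L : fieldType) (phi : {rmorphism L -> algC}) (E : pred L)
  (E0 : E 0) (E1 : E 1) (ED : forall a b, E a -> E b -> E (a + b))
  (EN : forall a, E a -> E (- a)) (EM : forall a b, E a -> E b -> E (a * b))
  (EV : forall a, E a -> E a^-1) :
  is_subfield (fun x => exists2 a, E a & x = phi a).
Proof.
split; first by exists 0; rewrite ?rmorph0.
split; first by exists 1; rewrite ?rmorph1.
split; first by move=> _ _ [a Ea ->] [b Eb ->]; exists (a + b); rewrite ?rmorphD; auto.
split; first by move=> _ [a Ea ->]; exists (- a); rewrite ?rmorphN; auto.
split; first by move=> _ _ [a Ea ->] [b Eb ->]; exists (a * b); rewrite ?rmorphM; auto.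
by move=> _ [a Ea ->]; exists a^-1; rewrite ?fmorphV; auto.
Qed.

Lemma poly_sub (Qn : fieldExtType rat) (QnC : {rmorphism Qn -> algC}) S
  (sS : is_subfield S) (K : {vspace Qn}) (p : {poly Qn}) x :
  p \is a polyOver K -> (forall c, c \in K -> S (QnC c)) -> S (QnC x) ->
  S (QnC p.[x]).
Proof.
move=> /polyOverP Kp HK Sx; rewrite horner_coef rmorph_sum; apply: sf_sum => // i _.
rewrite rmorphM rmorphXn; apply: sfM => //; [exact: HK | exact: sfX].
Qed.

Lemma adjoin_sub (Qn : fieldExtType rat) (QnC : {rmorphism Qn -> algC}) S
  (sS : is_subfield S) (rs : seq Qn) :
  forall K : {subfield Qn}, (forall c, c \in K -> S (QnC c)) ->
  (forall c, c \in rs -> S (QnC c)) -> forall b, b \in <<K & rs>>%VS -> S (QnC b).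
Proof.
elim: rs => [|x rs IH] K HK Hrs b; first by rewrite Fadjoin_nil; apply: HK.
rewrite adjoin_cons => Hb.
apply: (IH <<K; x>>%AS) => //.
- move=> c /Fadjoin_polyP[p Kp ->]; apply: (poly_sub sS Kp HK).
  by apply: Hrs; rewrite inE eqxx.
- by move=> c cr; apply: Hrs; rewrite inE cr orbT.
Qed.

Lemma one_sub (Qn : fieldExtType rat) (QnC : {rmorphism Qn -> algC}) S
  (sS : is_subfield S) c : c \in (1%VS : {vspace Qn}) -> S (QnC c).
Proof.
by move/vlineP=> [r ->]; rewrite alg_num_field fmorph_rat; apply: sf_rat.
Qed.

Lemma minPoly_root_prim (Qn : fieldExtType rat) (QnC : {rmorphism Qn -> algC})
  (w0 : Qn) n h :
  n.-primitive_root (QnC w0) -> coprime h n -> root (minPoly 1 w0) (w0 ^+ h).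
Proof.
move=> prim_z co_h_n; have n_gt0 := prim_order_gt0 prim_z.
rewrite -(fmorph_root QnC) rmorphXn /=.
set z := QnC w0 in prim_z *.
set p1 := map_poly QnC (minPoly 1 w0).
have [q1 Dp1]: exists q1, p1 = map_poly ratr q1.
  have aP i: (minPoly 1 w0)`_i \in 1%VS.
    by apply/polyOverP; apply: minPolyOver.
  have{aP} a_ i := sig_eqW (vlineP _ _ (aP i)).
  exists (\poly_(i < size (minPoly 1 w0)) sval (a_ i)).
  apply/polyP=> i; rewrite coef_poly coef_map coef_poly /=.
  case: ifP => _; rewrite ?rmorph0 //; case: (a_ i) => a /= ->.
  by rewrite alg_num_field fmorph_rat.
have: root p1 z by rewrite fmorph_root root_minPoly.
rewrite Dp1; have [q2 [Dq2 _] ->] := minCpolyP z.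
case/dvdpP=> r1 ->; rewrite rmorphM rootM /= -Dq2; apply/orP; right.
rewrite (minCpoly_cyclotomic prim_z) /cyclotomic.
rewrite (bigD1 (Ordinal (ltn_pmod h n_gt0))) ?coprime_modl //=.
by rewrite rootM root_XsubC prim_expr_mod ?eqxx.
Qed.
Lemma char_aut (gT : finGroupType) (G : {group gT}) (chi : 'CF(G))
  (u : {rmorphism algC -> algC}) (k : nat) :
  chi \is a character -> (forall e : algC, e ^+ #|G| = 1 -> u e = e ^+ k) ->
  forall x, x \in G -> u (chi x) = chi (x ^+ k)%g.
Proof.
move=> /char_reprP[[m rG] ->] Hu x Gx.
have [e [[B uB rGx] [e1 _] [chix _] _]] := repr_rsim_diag rG Gx.
have Dk j : rG (x ^+ j)%g = invmx B *m diag_mx (\row_i (e 0 i ^+ j)) *m B.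
  elim: j => [|j IH].
    rewrite expg0 repr_mx1.
    have -> : \row_i (e 0 i ^+ 0) = const_mx 1 by apply/rowP=> i; rewrite !mxE.
    by rewrite diag_const_mx mulmx1 mulVmx.
  rewrite expgSr repr_mxM ?groupX // IH rGx.
  rewrite -!mulmxA (mulmxA B) mulmxV // mul1mx !mulmxA -(mulmxA (invmx B) (diag_mx _) (diag_mx e)) mulmx_diag.
  congr (_ *m diag_mx _ *m _); apply/rowP=> i; rewrite !mxE exprSr.
  by [].
rewrite chix rmorph_sum /= cfunE groupX // mulr1n Dk mxtrace_mulC mulmxA mulmxV //.
rewrite mul1mx mxtrace_diag; apply: eq_bigr => i _; rewrite mxE; apply: Hu.
have /dvdnP[q Dq] := order_dvdG Gx.
by rewrite Dq mulnC exprM e1 expr1n.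
Qed.
Definition Mx (gT : finGroupType) (G : {group gT}) (phi : gT -> algC) : 'M[algC]_#|G| :=
  \matrix_(i, j) phi (enum_val i * (enum_val j)^-1)%g.

Lemma Mx_eq gT (G : {group gT}) phi psi : {in G, phi =1 psi} -> Mx G phi = Mx G psi.
Proof.
move=> E; apply/matrixP=> i j; rewrite !mxE; apply: E.
by rewrite groupM ?groupV ?enum_valP.
Qed.

Lemma Mx_sum gT (G : {group gT}) (I : Type) (r : seq I) (P : pred I) F :
  Mx G (fun x => \sum_(i <- r | P i) F i x) = \sum_(i <- r | P i) Mx G (F i).
Proof.
apply/matrixP=> a b; rewrite !mxE summxE; apply: eq_bigr => i _; by rewrite mxE.
Qed.

Lemma Mx_scale gT (G : {group gT}) c phi : Mx G (fun x => c * phi x) = c *: Mx G phi.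
Proof. by apply/matrixP=> a b; rewrite !mxE. Qed.

Lemma Mx_mul gT (G : {group gT}) phi psi :
  (forall x y, x \in G -> y \in G -> phi (y * x)%g = phi (x * y)%g) ->
  Mx G phi *m Mx G psi = Mx G (fun y => \sum_(x in G) phi (x * y)%g * psi x^-1%g).
Proof.
move=> phiC; apply/matrixP=> a b; rewrite !mxE.
set ga := enum_val a; set gb := enum_val b.
have Ga : ga \in G := enum_valP a.
have Gb : gb \in G := enum_valP b.
transitivity (\sum_(g in G) phi (ga * g^-1)%g * psi (g * gb^-1)%g).
  by rewrite [in RHS]big_enum_val; apply: eq_bigr => c _; rewrite !mxE.
have hinj : injective (fun x : gT => x^-1 * gb)%g.
  by move=> x1 x2 /mulIg /invg_inj.
rewrite (reindex_inj hinj) /=; apply: eq_big => x; first by rewrite groupMr ?groupV.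
move=> Gx; rewrite invMg invgK mulgA mulgK phiC //; first by rewrite groupM ?groupV.
by have := groupM Gx (groupVr Gb); rewrite mulgK groupV.
Qed.

Lemma cfun_commute gT (G : {group gT}) (phi : 'CF(G)) x y :
  x \in G -> phi (y * x)%g = phi (x * y)%g.
Proof.
move=> Gx; have E : ((x * y) ^ x = y * x)%g.
  by rewrite conjgE -mulgA mulKg.
rewrite -E. by rewrite cfunJ.
Qed.

Definition eidem gT (G : {group gT}) (i : Iirr G) (x : gT) :=
  'chi_i 1%g / #|G|%:R * 'chi_i x.

Definition Eid gT (G : {group gT}) (i : Iirr G) := Mx G (eidem i).

Lemma cardG_neq0 gT (G : {group gT}) : #|G|%:R != 0 :> algC.
Proof. by rewrite pnatr_eq0 -lt0n cardG_gt0. Qed.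

Lemma Eid_mul gT (G : {group gT}) (i j : Iirr G) :
  Eid i *m Eid j = (i == j)%:R *: Eid i.
Proof.
rewrite /Eid Mx_mul; last by move=> x y Gx Gy; rewrite /eidem cfun_commute.
rewrite -Mx_scale; apply: Mx_eq => y Gy /=.
have := generalized_orthogonality_relation y i j.
rewrite /eidem.
under eq_bigr => x _ do rewrite mulrACA.
rewrite -mulr_sumr => Ho.
have Hs : \sum_(x in G) 'chi_i (x * y)%g * 'chi_j x^-1%g
   = #|G|%:R * ((i == j)%:R * ('chi_i y / 'chi_i 1%g)).
  by rewrite -Ho mulrA mulfV ?cardG_neq0 // mul1r.
rewrite Hs {Ho Hs}; have [<-{j}|nij] := eqVneq i j; last by rewrite (_ : false%:R = 0) // !(mul0r, mulr0).
have n0 := cardG_neq0 G; have c0 := irr1_neq0 i.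
rewrite !mul1r; field.
by rewrite n0 c0.
Qed.

Lemma Eid_sum gT (G : {group gT}) : \sum_(i : Iirr G) Eid i = 1%:M.
Proof.
apply/matrixP=> a b; rewrite summxE !mxE.
have -> : \sum_(i : Iirr G) Eid i a b
   = #|G|%:R^-1 * cfReg G (enum_val a * (enum_val b)^-1)%g.
  rewrite cfReg_sum sum_cfunE mulr_sumr; apply: eq_bigr => i _.
  by rewrite /Eid /eidem !mxE cfunE mulrAC mulrC mulrA.
rewrite cfRegE -eq_mulgV1 (inj_eq enum_val_inj).
by case: (a == b); rewrite ?mulr0 // mulVf ?cardG_neq0.
Qed.

Lemma Eid_neq0 gT (G : {group gT}) (i : Iirr G) : Eid i != 0.
Proof.
apply/eqP=> H.
pose r := enum_rank_in (group1 G) 1%g.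
have := congr1 (fun M : 'M_#|G| => M r r) H.
rewrite /Eid /eidem !mxE mulgV; apply/eqP.
by rewrite !mulf_neq0 ?invr_eq0 ?cardG_neq0 ?irr1_neq0.
Qed.

Lemma eig_decomp (n : nat) (I : finType) (E : I -> 'M[algC]_n) (l : I -> algC) :
  (forall i j, E i *m E j = (i == j)%:R *: E i) -> \sum_i E i = 1%:M ->
  (forall i, E i != 0) ->
  forall a, eigenvalue (\sum_i l i *: E i) a <-> exists i, a = l i.
Proof.
move=> EE Esum Enz a; set A := \sum_i l i *: E i.
have AE i : A *m E i = l i *: E i.
  rewrite /A mulmx_suml (bigD1 i) //= big1 => [|j nji].
    by rewrite -scalemxAl EE eqxx scale1r addr0.
  by rewrite -scalemxAl EE (negbTE nji) scale0r scaler0.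
have EA i : E i *m A = l i *: E i.
  rewrite /A mulmx_sumr (bigD1 i) //= big1 => [|j nji].
    by rewrite -scalemxAr EE eqxx scale1r addr0.
  by rewrite -scalemxAr EE eq_sym (negbTE nji) scale0r scaler0.
split.
  move/eigenvalueP=> [v vA nz].
  have [i /eqP Hi | H] := pickP (fun i => a == l i); first by exists i.
  case/eqP: nz.
  have vE i : v *m E i = 0.
    have : (a - l i) *: (v *m E i) = 0.
      have h1 : a *: (v *m E i) = v *m A *m E i by rewrite vA scalemxAl.
      have h2 : l i *: (v *m E i) = v *m A *m E i by rewrite -mulmxA AE scalemxAr.
      by rewrite scalerBl h1 h2 subrr.
    by move/eqP; rewrite scaler_eq0 subr_eq0 H /= => /eqP.
  by rewrite -[v]mulmx1 -Esum mulmx_sumr big1.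
move=> [i ->]; apply/eigenvalueP.
have [r Hr | H] := pickP (fun r => row r (E i) != 0); last first.
  case/eqP: (Enz i); apply/row_matrixP => r.
  by move: (H r) => /negbFE/eqP ->; rewrite row0.
exists (row r (E i)) => //; rewrite -row_mul EA; by apply/rowP=> k; rewrite !mxE.
Qed.

Lemma sum_expg gT (G : {group gT}) k (P : gT -> algC) :
  coprime #|G| k -> \sum_(x in G) P (x ^+ k)%g = \sum_(x in G) P x.
Proof.
move=> cop; have K := expgK cop.
have inj : {in G &, injective (fun x => x ^+ k)%g}.
  by move=> x y Gx Gy E; rewrite -(K x Gx) E K.
rewrite -(big_imset _ inj) /=.
have -> : ((fun x => x ^+ k) @: G)%g = G :> {set gT}.
  apply/setP=> y; apply/imsetP/idP => [[x Gx ->]|Gy]; first exact: groupX.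
  exists (y ^+ expg_invn G k)%g; first exact: groupX.
  by rewrite -expgM mulnC expgM K.
by [].
Qed.

Lemma Fcf_subproof gT (G : {group gT}) (f : gT -> rat)
  (fclass : forall x y, x \in G -> y \in G -> f (x ^ y)%g = f x) :
  is_class_fun <<G>>%g [ffun x => (ratr (f x) : algC) *+ (x \in G)].
Proof.
rewrite genGid; apply: intro_class_fun => [x y Gx Gy | x /negbTE -> //].
by rewrite groupJr // fclass.
Qed.

Lemma gen_field_ext (P Q : algC -> Prop) : (forall y, P y <-> Q y) ->
  forall x, gen_field P x <-> gen_field Q x.
Proof.
move=> PQ x; split=> H S sS HS; apply: H => // y Hy; apply: HS; exact/PQ.
Qed.

Lemma gal_eq_gen (L : splittingFieldType rat) (w0 : L)
  (gen0 : <<1; w0>>%VS = fullv) (s1 s2 : gal_of fullv) : s1 w0 = s2 w0 -> s1 = s2.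
Proof.
move=> Ew; apply/eqP/gal_eqP => b _.
have : b \in <<1; w0>>%VS by rewrite gen0 memvf.
case/Fadjoin_polyP => p Kp ->.
rewrite -!horner_map; congr (_.[_]); last exact: Ew.
apply/polyP=> i; rewrite !coef_map /=.
by have /vlineP[r ->] := polyOverP Kp i; rewrite !rmorph_alg.
Qed.

Lemma gal_in1 (L : splittingFieldType rat) (sg : gal_of {:L}) :
  (sg \in 'Gal({:L} / 1))%g.
Proof. by rewrite gal_kHom ?sub1v // k1AHom. Qed.

Unset Implicit Arguments.

Theorem mainTheorem6 (gT : finGroupType) (G : {group gT}) (f : gT -> rat)
  (z : algC) (zprim : #|G|.-primitive_root z)
  (fclass : forall x y, x \in G -> y \in G -> f (x ^ y)%g = f x)
  (fsym : forall x, x \in G -> f (x^-1)%g = f x) :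
  (forall x : algC,
     SF G f x <->
     (gen_field (fun y => y = z) x /\
      forall (u : {rmorphism algC -> algC}) (h : 'I_#|G|),
        h \in Hf G f -> u z = z ^+ h -> u x = x))
  /\ Qdim (SF G f) (totient #|G| %/ #|Hf G f|).
Proof.
have n_gt0 : (0 < #|G|)%N := cardG_gt0 G.
pose F : 'CF(G) := Cfun 0 (Fcf_subproof fclass).
have FE x : x \in G -> F x = ratr (f x) by move=> Gx; rewrite cfunE Gx mulr1n.
pose lam (i : Iirr G) := ('chi_i 1%g)^-1 * \sum_(x in G) ratr (f x) * ('chi_i x)^*.
have lamE i : lam i * ('chi_i 1%g / #|G|%:R) = '[F, 'chi_i].
  rewrite cfdotE /lam.
  have -> : \sum_(x in G) F x * ('chi_i x)^* = \sum_(x in G) ratr (f x) * ('chi_i x)^*.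
    by apply: eq_bigr => x Gx; rewrite FE.
  have c0 := irr1_neq0 i; have n0 := cardG_neq0 G.
  field; by rewrite c0 n0.
have fourier y : y \in G ->
    ratr (f y) = \sum_i lam i * ('chi_i 1%g / #|G|%:R) * 'chi_i y.
  move=> Gy; rewrite -FE // {1}(cfun_sum_cfdot F) sum_cfunE.
  by apply: eq_bigr => i _; rewrite cfunE lamE.
have Adec : cayley_adj G f = \sum_i lam i *: Eid i.
  transitivity (Mx G (fun x => \sum_i lam i * eidem i x)).
    apply/matrixP => a b; rewrite !mxE fourier ?groupM ?groupV ?enum_valP //.
    by apply: eq_bigr => i _; rewrite /eidem !mulrA.
  by rewrite Mx_sum; apply: eq_bigr => i _; rewrite /Eid -Mx_scale.
have eigE a : eigenvalue (cayley_adj G f) a <-> exists i, a = lam i.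
  by rewrite Adec; apply: eig_decomp; [exact: Eid_mul | exact: Eid_sum | exact: Eid_neq0].
have SFE x : SF G f x <-> gen_field (fun y => exists i, y = lam i) x.
  by apply: gen_field_ext.
have L1 (nu : {rmorphism algC -> algC}) (k : nat) :
    (forall e, e ^+ #|G| = 1 -> nu e = e ^+ k) -> coprime k #|G| ->
    (forall g, g \in G -> f (g ^+ k)%g = f g) -> forall i, nu (lam i) = lam i.
  move=> Hnu cop Hk i; rewrite /lam rmorphM fmorphV rmorph_sum /=.
  rewrite (char_aut (irr_char i) Hnu (group1 G)) expg1n; congr (_ * _).
  transitivity (\sum_(x in G) (fun y => ratr (f y) * 'chi_i y^-1%g) (x ^+ k)%g).
    apply: eq_bigr => x Gx /=; rewrite rmorphM fmorph_rat -irr_inv.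
    by rewrite (char_aut (irr_char i) Hnu (groupVr Gx)) Hk // expgVn.
  rewrite (sum_expg (fun y => ratr (f y) * 'chi_i y^-1%g)) 1?coprime_sym //; apply: eq_bigr => x Gx.
  by rewrite irr_inv.
have L2 (nu : {rmorphism algC -> algC}) (k : nat) :
    (forall e, e ^+ #|G| = 1 -> nu e = e ^+ k) -> (forall i, nu (lam i) = lam i) ->
    forall g, g \in G -> f (g ^+ k)%g = f g.
  move=> Hnu Hlam g Gg.
  have : ratr (f (g ^+ k)%g) = ratr (f g) :> algC.
    rewrite -[in RHS](fmorph_rat nu) fourier ?groupX // fourier // rmorph_sum.
    apply: eq_bigr => i _; rewrite rmorphM /= (rmorphM nu (lam i)) Hlam fmorph_div rmorph_nat.
    rewrite (char_aut (irr_char i) Hnu (group1 G)) expg1n.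
    by rewrite (char_aut (irr_char i) Hnu Gg).
  by move/eqP; rewrite (inj_eq (fmorph_inj _)) => /eqP.
have root_gen (nu : {rmorphism algC -> algC}) (k : nat) :
    nu z = z ^+ k -> forall e, e ^+ #|G| = 1 -> nu e = e ^+ k.
  move=> Hz e /(prim_rootP zprim)[j ->].
  by rewrite rmorphXn /= Hz exprAC.
have [Qn galQn [QnC gQnC [w [prim_w genw] Qn_g]]] := group_num_field_exists G.
have primQw : #|G|.-primitive_root (QnC w) by rewrite fmorph_primitive_root.
have [j Dz] := prim_rootP primQw (prim_expr_order zprim).
pose w0 := w ^+ j.
have Dw0 : QnC w0 = z by rewrite rmorphXn Dz.
have prim_w0 : #|G|.-primitive_root w0 by rewrite -(fmorph_primitive_root QnC) Dw0.
have gen0 : <<1; w0>>%VS = fullv.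
  apply/eqP; rewrite eqEsubv subvf /= -genw.
  have [i ->] := prim_rootP prim_w0 (prim_expr_order prim_w).
  by rewrite (sub_adjoin1v _ <<1; w0>>%AS) rpredX // memv_adjoin.
pose Q x := exists2 a : Qn, predT a & x = QnC a.
have sQ : is_subfield Q.
  by apply: (@image_subfield _ QnC predT).
have QzE x : gen_field (fun y => y = z) x <-> Q x.
  split => [H | [b _ ->]]; first by apply: H sQ _ => y ->; exists w0.
  have : b \in <<1; w0>>%VS by rewrite gen0 memvf.
  case/Fadjoin_polyP => p Kp ->.
  apply: (poly_sub (gen_field_subfield _) Kp) => [c Kc|].
    exact: one_sub (gen_field_subfield _) c Kc.
  by rewrite Dw0; apply: gen_field_in.
have chiQ (i : Iirr G) x : x \in G -> Q ('chi_i x).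
  move=> Gx; have [b Hb] := Qn_g _ G _ (irr_char i) x (order_dvdG Gx).
  by exists b.
have lamQ (i : Iirr G) : exists b : Qn, lam i == QnC b.
  have : Q (lam i).
    rewrite /lam; apply: (sfM sQ); first by apply: (sfV sQ); apply: chiQ.
    apply: (big_ind Q); [exact: sf0 sQ | exact: sfD sQ | move=> x Gx]; apply: (sfM sQ); first exact: sf_rat.
    by rewrite -irr_inv; apply: chiQ; rewrite groupV.
  by case=> b _ ->; exists b.
pose a i := xchoose (lamQ i).
have Da i : lam i = QnC (a i) by apply/eqP; exact: (xchooseP (lamQ i)).
pose s := [seq a i | i <- enum (Iirr G)].
pose E := <<1 & s>>%AS.
have SFiff x : SF G f x <-> exists2 b, b \in E & x = QnC b.
  rewrite SFE; split.
    move=> H; apply: (H (fun x => exists2 b, b \in E & x = QnC b)).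
      apply: (@image_subfield _ QnC (fun b => b \in E)).
      - exact: mem0v.
      - exact: mem1v.
      - by move=> ? ? ? ?; apply: memvD.
      - by move=> ? ?; rewrite memvN.
      - by move=> ? ? ? ?; apply: memvM.
      - by move=> ? ?; rewrite memvV.
    move=> _ [i ->]; exists (a i) => //.
    by apply: seqv_sub_adjoin; apply: map_f; rewrite mem_enum.
  move=> [b Eb ->].
  apply: (adjoin_sub (gen_field_subfield _) (K := 1%AS) _ _ Eb).
    by move=> c Kc; apply: one_sub (gen_field_subfield _) c Kc.
  move=> c /mapP[i _ ->]; apply: gen_field_in; exists i; exact: esym (Da i).
have galE : galois E fullv by apply: galoisS galQn; rewrite sub1v subvf.
have GalE (sg : gal_of {:Qn}) :
    (sg \in 'Gal({:Qn} / E))%g = [forall i, sg (a i) == a i].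
  rewrite -sub1set galois_connection ?subvf //.
  apply/idP/forallP => [H i | H].
    have : a i \in fixedField [set sg].
      by apply: (subvP H); apply: seqv_sub_adjoin; apply: map_f; rewrite mem_enum.
    by case/mem_fixedFieldP => _ Hfx; rewrite Hfx ?set11.
  apply/Fadjoin_seqP; split; first exact: sub1v.
  move=> c /mapP[i _ ->]; apply/fixedFieldP; first exact: memvf.
  by move=> x; rewrite inE => /eqP ->; apply/eqP/H.
have expo (sg : gal_of {:Qn}) : exists2 k : 'I_#|G|, coprime k #|G| & sg w0 = w0 ^+ k.
  have prim : #|G|.-primitive_root (sg w0) by rewrite fmorph_primitive_root.
  have [k Hk] := prim_rootP prim_w0 (prim_expr_order prim).
  by exists k => //; rewrite -(prim_root_exp_coprime k prim_w0) -Hk.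
have Ksg (sg : gal_of {:Qn}) (k : nat) : sg w0 = w0 ^+ k ->
    {nu : {rmorphism algC -> algC} | (forall b, QnC (sg b) = nu (QnC b))
       & forall e, e ^+ #|G| = 1 -> nu e = e ^+ k}.
  move=> Hk; have [nu Hnu] := gQnC sg; exists nu => //; apply: root_gen.
  by rewrite -Dw0 -Hnu Hk rmorphXn.
have GalEk (sg : gal_of {:Qn}) (k : 'I_#|G|) : coprime k #|G| -> sg w0 = w0 ^+ k ->
    (sg \in 'Gal({:Qn} / E))%g = (k \in Hf G f).
  move=> cop Hk; have [nu Hnu Hek] := Ksg sg k Hk.
  rewrite GalE inE cop /=; apply/forallP/forall_inP => [H g Gg | H i].
    apply/eqP; apply: (L2 nu k Hek) => // i.
    by rewrite Da -Hnu (eqP (H i)).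
  apply/eqP; apply: (fmorph_inj QnC); rewrite Hnu -Da (L1 nu k Hek) ?Da //.
  by move=> g Gg; apply/eqP/H.
have nF : normalField 1 {:Qn} by case/and3P: galQn.
pose tau (h : 'I_#|G|) : gal_of {:Qn} := odflt 1%g [pick sg : gal_of {:Qn} | sg w0 == w0 ^+ h].
have tauP (h : 'I_#|G|) : coprime h #|G| -> tau h w0 = w0 ^+ h.
  move=> cop; rewrite /tau; case: pickP => [sg /eqP // | H]; exfalso.
  have prz : #|G|.-primitive_root (QnC w0) by rewrite Dw0.
  have [sg _ Hsg] := normalField_root_minPoly (sub1v _) nF (memvf w0)
    (minPoly_root_prim prz cop).
  by move: (H sg); rewrite Hsg eqxx.
have tau_inj : {in [pred h : 'I_#|G| | coprime h #|G|] &, injective tau}.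
  move=> h1 h2 c1 c2 E12; apply/val_inj => /=.
  have := tauP h1 c1; rewrite E12 tauP // => /eqP.
  by rewrite (eq_prim_root_expr prim_w0) !modn_small // => /eqP.
have cardA (A : {set gal_of {:Qn}}) (H : {set 'I_#|G|}) :
    (forall h, h \in H -> coprime h #|G|) ->
    (forall (sg : gal_of {:Qn}) (k : 'I_#|G|), coprime k #|G| -> sg w0 = w0 ^+ k -> (sg \in A) = (k \in H)) ->
    #|A| = #|H|.
  move=> Hcop HA.
  have -> : A = tau @: H.
    apply/setP => sg; apply/idP/imsetP => [Asg | [k Hk ->]].
      have [k cop Hsk] := expo sg; exists k; first by rewrite -(HA sg k cop Hsk).
      by apply: (gal_eq_gen gen0); rewrite Hsk tauP.
    by rewrite (HA _ k (Hcop k Hk)) // tauP // Hcop.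
  rewrite card_in_imset // => h1 h2 H1 H2; apply: tau_inj; rewrite inE Hcop //.
have cardE : #|'Gal({:Qn} / E)%g| = #|Hf G f|.
  apply: cardA => [h | sg k cop Hk]; first by rewrite inE => /andP[].
  exact: GalEk.
have card1 : #|'Gal({:Qn} / 1)%g| = totient #|G|.
  rewrite (cardA _ [set h : 'I_#|G| | coprime h #|G|]).
    rewrite totient_count_coprime big_mkord -sum1_card big_mkcond /=.
    by apply: eq_bigr => i _; rewrite inE coprime_sym; case: coprime.
    by move=> h; rewrite inE.
  by move=> sg k cop _; rewrite gal_in1 inE cop.
have dimE : \dim E = (totient #|G| %/ #|Hf G f|)%N.
  have d1 : \dim {:Qn} = totient #|G|.
    by rewrite -card1 -galois_dim // dimv1 divn1.
  have dE : \dim_E {:Qn} = #|Hf G f| by rewrite galois_dim // cardE.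
  have Hpos : (0 < #|Hf G f|)%N by rewrite -cardE; apply/card_gt0P; exists 1%g; exact: group1.
  by rewrite -d1 (dim_sup_field (subvf E)) dE mulKn.
have /galois_fixedField fixE := galE.
split.
  move=> x; split.
    move=> Hx; split.
      by apply/QzE; case/SFiff: Hx => b _ ->; exists b.
    move=> u h Hh Huz; have Hek := root_gen u h Huz.
    move/SFE: Hx => Hx; apply: (Hx _ (fixed_subfield u)) => _ [i ->].
    move: Hh; rewrite inE => /andP[cop /forall_inP Hfh].
    by apply: (L1 u h Hek cop) => g Gg; apply/eqP/Hfh.
  move=> [/QzE [b _ ->] Hu]; apply/SFiff; exists b => //.
  rewrite -fixE; apply/fixedFieldP; first exact: memvf.
  move=> sg Hsg; have [k cop Hk] := expo sg; have [nu Hnu Hek] := Ksg sg k Hk.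
  apply: (fmorph_inj QnC); rewrite Hnu; apply: (Hu nu k).
    by rewrite -(GalEk sg k cop Hk).
  by rewrite -Dw0 -Hnu Hk rmorphXn.
rewrite -dimE; pose bs := vbasis E.
exists (map_tuple QnC bs); split.
- move=> i; apply/SFiff; exists (tnth bs i); last by rewrite tnth_map.
  by apply: vbasis_mem; apply: mem_tnth.
- move=> x; split.
    case/SFiff => b Eb ->; exists [tuple coord bs i b | i < \dim E].
    rewrite {1}(coord_vbasis Eb) rmorph_sum; apply: eq_bigr => i _.
    by rewrite rmorphZ_num !tnth_map tnth_ord_tuple (tnth_nth 0).
  case=> c ->; apply/SFiff; exists (\sum_i tnth c i *: tnth bs i).
    by apply: memv_suml => i _; apply: memvZ; apply: vbasis_mem; apply: mem_tnth.
  by rewrite rmorph_sum; apply: eq_bigr => i _; rewrite rmorphZ_num tnth_map.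
- move=> c Hc i.
  have H0 : \sum_(j < \dim E) tnth c j *: bs`_j = 0.
    apply: (fmorph_inj QnC); rewrite rmorph0 rmorph_sum -[RHS]Hc.
    by apply: eq_bigr => jj _; rewrite rmorphZ_num tnth_map (tnth_nth 0).
  by move/freeP: (basis_free (vbasisP E)) => Hfree; apply: (Hfree (fun jj => tnth c jj)).
Qed.
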